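(* Let $t\ge 3$ and $\Delta\ge 4$ be integers, and let $P_t$ be a path with vertices $p_1,\dots,p_t$. Form an intermediate tree by appending onto every vertex $p_j$ of the path $\Delta-2$ copies of the $\Delta$-star (each identified by one of its leaves with $p_j$). Then, for each $j$, subdivide a single edge between $p_j$ and an adjacent support vertex (center of one of the stars appended at $p_j$). Let $T_{t,\Delta}$ be the resulting tree and $n$ its order. Then \[\gamma^{\rm ID}(T_{t,\Delta}) = \left(\frac{\Delta-1+\frac{1}{\Delta-2}}{\Delta+\frac{2}{\Delta-2}}\right)n > \left(\frac{\Delta-1}{\Delta}\right)n-\frac{n}{\Delta^2}.\]
   Context: An identifying code of a graph $G$ is a set $C\subseteq V(G)$ such that every vertex $v$ has $N[v]\cap C\neq\emptyset$ and for all distinct $u,v$, $N[u]\cap C \ne N[v]\cap C$, where $N[v]$ is the closed neighborhood; $\gamma^{\rm ID}(G)$ is its minimum size. A $\Delta$-star is $K_{1,\Delta}$. *)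

(* Defs.v *)
From mathcomp Require Import all_boot all_order all_algebra.
Set Implicit Arguments. Unset Strict Implicit. Unset Printing Implicit Defensive.

Section IdCodes.
Variable V : finType.
Variable adj : rel V.

Definition cnbhd (v : V) : {set V} := [set u | (u == v) || adj v u].

Definition is_idcode (C : {set V}) : bool :=
  [forall v, cnbhd v :&: C != set0] &&
  [forall u, forall v, (u != v) ==> (cnbhd u :&: C != cnbhd v :&: C)].

(* gamma^ID: minimum size of an identifying code (default #|V|.+1 if none exists) *)
Definition gammaID : nat :=
  \big[minn/#|V|.+1]_(C : {set V} | is_idcode C) #|C|.
End IdCodes.

(* A vertex is (j, x) with j : 'I_t the index of the path vertex p_j and
   x = inl (inl tt)      : p_j itself
     = inl (inr tt)      : the subdivision vertex on the edge p_j -- c_{j,0}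
     = inr (inl k)       : centre c_{j,k} of the k-th appended Delta-star (k < Delta-2)
     = inr (inr (k, l))  : the l-th remaining leaf of that star (l < Delta-1);
   the Delta-th leaf of every star at p_j is identified with p_j.  Star 0 is the
   one whose edge to p_j is subdivided. *)
Definition Tvtx (t D : nat) : finType :=
  ('I_t * ((unit + unit) + ('I_(D - 2) + 'I_(D - 2) * 'I_(D - 1))))%type.

Definition Tedge (t D : nat) (a b : Tvtx t D) : bool :=
  match a.2, b.2 with
  | inl (inl _), inl (inl _) => (val a.1).+1 == val b.1
  | inl (inl _), inl (inr _) => a.1 == b.1
  | inl (inr _), inr (inl k) => (a.1 == b.1) && (val k == 0)
  | inl (inl _), inr (inl k) => (a.1 == b.1) && (val k != 0)
  | inr (inl k), inr (inr (k', _)) => (a.1 == b.1) && (k == k')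
  | _, _ => false
  end.

Definition Tadj (t D : nat) : rel (Tvtx t D) :=
  fun a b => Tedge a b || Tedge b a.

(* Main.v *)
Require Import Defs.
From mathcomp Require Import all_boot all_order all_algebra zify.
Set Implicit Arguments. Unset Strict Implicit. Unset Printing Implicit Defensive.
Lemma eq_ll (A B : eqType) (a b : A) : (@inl A B a == inl b) = (a == b).
Proof. by apply/eqP/eqP => [[]|->]. Qed.
Lemma eq_rr (A B : eqType) (a b : B) : (@inr A B a == inr b) = (a == b).
Proof. by apply/eqP/eqP => [[]|->]. Qed.
Lemma eq_lr (A B : eqType) (a : A) (b : B) : (inl a == inr b) = false.
Proof. by apply/eqP. Qed.
Lemma eq_rl (A B : eqType) (a : A) (b : B) : (inr b == inl a) = false.
Proof. by apply/eqP. Qed.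
Lemma eq_tt (a b : unit) : (a == b) = true.
Proof. by case: a; case: b. Qed.
Definition sumE := (eq_ll, eq_rr, eq_lr, eq_rl, eq_tt, xpair_eqE, andbT, andbF, orbF, orbT, andbb, eqxx).
Lemma ord_le D (l : 'I_(D-1)) : (val l <= D-2)%N.
Proof. have := ltn_ord l. change (val l) with (nat_of_ord l). lia. Qed.
Section S.
Variables t D : nat.
Hypothesis hD : (4 <= D)%N.
Local Notation V := (Tvtx t D).
Local Notation N := (cnbhd (@Tadj t D)).

Definition C0 : {set V} := [set v : V | match v.2 with
  | inl (inl _) => false | inl (inr _) => true | inr (inl _) => true
  | inr (inr (_, l)) => (val l < D - 2)%N end].

Definition rk (v : V) : nat := match v.2 with
  | inl (inl _) => 0 | inl (inr _) => 1 | inr (inl _) => 2 | inr (inr _) => 3 end.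

Ltac simpN := rewrite /cnbhd ?inE /Tadj /Tedge /= ?sumE /=.

Lemma sep_ord (u v : V) : u != v -> (rk u <= rk v)%N ->
  exists2 w, w \in C0 & (w \in N u) != (w \in N v).
Proof.
have hk0 : (0 < D - 2)%N by rewrite subn_gt0 (leq_trans _ hD).
have hl0 : (0 < D - 1)%N by rewrite subn_gt0 (leq_trans _ hD).
have hl1 : (1 < D - 1)%N by rewrite ltn_subRL (leq_trans _ hD).
have hl0C : (0 < D - 2)%N by [].
have hl1C : (1 < D - 2)%N by rewrite ltn_subRL (leq_trans _ hD).
pose k0 := Ordinal hk0. pose l0 := Ordinal hl0. pose l1 := Ordinal hl1.
case: u => j [[[]|[]]|[k|[k l]]]; case: v => j' [[[]|[]]|[k'|[k' l']]] //= huv _.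
all: [> exists (j, inl (inr tt)) | exists (j', inr (inl k0)) | exists (j', inr (inr (k', l0))) | exists (j, inl (inr tt))
  | exists (j, inl (inr tt)) | exists (j', inr (inr (k', l0))) | exists (j, inl (inr tt))
  | exists (j, inr (inr (k, l0))) | exists (j, inr (inr (k, if val l' == 0 then l1 else l0))) | idtac ].
all: try (move: huv; simpN; try (case: ifP => //); by rewrite ?(eq_sym j') ?(eq_sym k'); try case: (j == j'); try case: (k == k'); move=> * //).
- simpN; case: ifP => [/eqP h0|/negbT h0]; apply/negP => /and3P [_ _ /eqP h]; by rewrite -h in h0.
- move: huv; simpN; case: (eqVneq j j') => [<-|hj].
  + case: (eqVneq k k') => [<-|hk].
    * rewrite /= => hll.
      exists (j, inr (inr (k, if (val l < D - 2)%N then l else l'))).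
      -- rewrite inE /=; case: ifP => // /negbT; rewrite -leqNgt => hl.
        have h1 := ord_le l; have h2 := ord_le l'; rewrite ltn_neqAle h2 andbT; apply: contra hll => /eqP h.
        by rewrite -val_eqE /= h eqn_leq h1 hl.
      -- simpN; case: ifP => _; rewrite eqxx /=.
         by rewrite (negbTE hll).
         by rewrite (eq_sym l') (negbTE hll).
    * move=> _; exists (j, inr (inl k)); [by simpN | simpN; by rewrite hk].
  + move=> _; exists (j, inr (inl k)); [by simpN | simpN; by rewrite (negbTE hj)].
Qed.

Lemma sum_unit (F : unit -> nat) : \sum_(i : unit) F i = F tt.
Proof. by rewrite (big_pred1 tt) // => [[]]. Qed.

Definition blk (C : {set V}) (j : 'I_t) : nat :=
  ((j, inl (inl tt)) \in C : nat) + ((j, inl (inr tt)) \in C : nat) +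
  \sum_(k < D - 2) (((j, inr (inl k)) \in C : nat) +
                    \sum_(l < D - 1) ((j, inr (inr (k, l))) \in C : nat)).

Lemma card_blk (C : {set V}) : #|C| = \sum_(j < t) blk C j.
Proof.
rewrite -sum1_card big_mkcond /=.
transitivity (\sum_j \sum_x (((j, x) : V) \in C : nat)).
  by rewrite pair_bigA /=; apply: eq_bigr => [[j x]] _; case: ifP.
apply: eq_bigr => j _; rewrite /blk !big_sumType /= !sum_unit big_split /=.
congr (_ + (_ + _)); rewrite pair_bigA /=; by apply: eq_bigr => -[k l].
Qed.

Lemma inN_leaf j k l (w : V) :
  (w \in N (j, inr (inr (k,l)))) = (w == (j, inr (inr (k,l)))) || (w == (j, inr (inl k))).
Proof. by case: w => j' [[[]|[]]|[k'|[k' l']]]; simpN. Qed.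

Lemma inN_S j (w : V) :
  (w \in N (j, inl (inr tt))) = [|| w == (j, inl (inr tt)), w == (j, inl (inl tt)) |
     (w.1 == j) && match w.2 with inr (inl k) => val k == 0 | _ => false end].
Proof. by case: w => j' [[[]|[]]|[k'|[k' l']]]; simpN; rewrite ?(eq_sym j). Qed.

Lemma sum_lt n m : \sum_(l < n) (l < m : nat) = minn m n.
Proof.
elim: n => [|n IH]; first by rewrite big_ord0 minn0.
rewrite big_ord_recr /= IH; case: ltnP => h; lia.
Qed.

Lemma blkC0 j : blk C0 j = (D - 2) * (D - 1) + 1.
Proof.
rewrite /blk !inE /=.
rewrite (eq_bigr (fun _ => D - 1)); last first.
  move=> k _; rewrite inE /=.
  under eq_bigr => l _ do rewrite inE /=.
  rewrite sum_lt; lia.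
rewrite sum_nat_const card_ord; lia.
Qed.

Lemma sep_sym (C : {set V}) (u v : V) :
  (exists2 w, w \in C & (w \in N u) != (w \in N v)) ->
  (exists2 w, w \in C & (w \in N v) != (w \in N u)).
Proof. by case=> w wC hw; exists w => //; rewrite eq_sym. Qed.

Lemma idcodeP (C : {set V}) :
  (forall v, exists2 w, w \in C & w \in N v) ->
  (forall u v, u != v -> exists2 w, w \in C & (w \in N u) != (w \in N v)) ->
  is_idcode (@Tadj t D) C.
Proof.
move=> hdom hsep; apply/andP; split.
  apply/forallP => v; case: (hdom v) => w wC wN; apply/set0Pn; exists w.
  by rewrite inE wN wC.
apply/forallP => u; apply/forallP => v; apply/implyP => huv.
case: (hsep u v huv) => w wC hw; apply/negP => /eqP E.
have := congr1 (fun S : {set V} => w \in S) E; rewrite /= !in_setI wC !andbT => E'.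
by move: hw; rewrite E' eqxx.
Qed.

Lemma C0_id : is_idcode (@Tadj t D) C0.
Proof.
apply: idcodeP.
  case=> j [[[]|[]]|[k|[k l]]].
  - by exists (j, inl (inr tt)); simpN.
  - by exists (j, inl (inr tt)); simpN.
  - by exists (j, inr (inl k)); simpN.
  - by exists (j, inr (inl k)); simpN.
move=> u v huv; case: (leqP (rk u) (rk v)) => h.
  exact: sep_ord.
by apply: sep_sym; apply: sep_ord; [rewrite eq_sym | exact: ltnW].
Qed.

Lemma card_C0 : #|C0| = t * ((D - 2) * (D - 1) + 1).
Proof.
rewrite card_blk (eq_bigr _ (fun j _ => blkC0 j)) sum_nat_const card_ord //.
Qed.

Definition nb := locked (fun (v w : V) => w \in N v).
Lemma nbE v w : nb v w = (w \in N v).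
Proof. by rewrite /nb -lock. Qed.

Section Lower.
Variable C : {set V}.
Hypothesis hC : is_idcode (@Tadj t D) C.

Lemma domP v : exists2 w, w \in C & nb v w.
Proof.
case/andP: hC => /forallP /(_ v) /set0Pn [w]; rewrite in_setI => /andP [h1 h2] _.
by exists w => //; rewrite nbE.
Qed.

Lemma sepP u v : u != v -> exists2 w, w \in C & nb u w != nb v w.
Proof.
move=> huv; case/andP: hC => _ /forallP /(_ u) /forallP /(_ v) /implyP /(_ huv) hne.
apply/exists_inP; apply: contraNT hne => /exists_inPn hw.
apply/eqP/setP => w; rewrite !in_setI; case wC: (w \in C); rewrite ?andbT ?andbF //.
by have := hw w wC; rewrite !nbE; move/negPn/eqP.
Qed.

Definition Pv (j : 'I_t) : V := (j, inl (inl tt)).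
Definition Sv (j : 'I_t) : V := (j, inl (inr tt)).
Definition Cv (j : 'I_t) (k : 'I_(D - 2)) : V := (j, inr (inl k)).
Definition Lv (j : 'I_t) (k : 'I_(D - 2)) (l : 'I_(D - 1)) : V := (j, inr (inr (k, l))).

Lemma inN_Lv j k l (w : V) : nb (Lv j k l) w = (w == Lv j k l) || (w == Cv j k).
Proof. rewrite nbE; exact: inN_leaf. Qed.

Lemma inN_Sv j (w : V) : nb (Sv j) w = [|| w == Sv j, w == Pv j |
     (w.1 == j) && match w.2 with inr (inl k) => val k == 0 | _ => false end].
Proof. rewrite nbE; exact: inN_S. Qed.

Lemma star_leaf_out j k l0 : Lv j k l0 \notin C ->
  Cv j k \in C /\ forall l, l != l0 -> Lv j k l \in C.
Proof.
move=> hl0; split.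
  case: (domP (Lv j k l0)) => w wC; rewrite inN_Lv => /orP [/eqP E|/eqP E].
    by rewrite -E wC in hl0.
  by rewrite -E.
move=> l hl; apply/negPn/negP => hl'.
have : Lv j k l != Lv j k l0 by rewrite /Lv !sumE /=.
case/sepP => w wC; rewrite !inN_Lv.
have h1 : (w == Lv j k l) = false by apply: contraNF hl' => /eqP <-.
have h2 : (w == Lv j k l0) = false by apply: contraNF hl0 => /eqP <-.
by rewrite h1 h2 /= eqxx.
Qed.

Lemma sum_all (n : nat) (F : 'I_n -> bool) : (forall l, F l) -> \sum_(l < n) (F l : nat) = n.
Proof.
move=> h; rewrite (eq_bigr (fun _ => 1)) ?sum_nat_const ?card_ord ?muln1 // => l _.
by rewrite h.
Qed.

Lemma sum_but (n : nat) (F : 'I_n -> bool) l0 : (forall l, l != l0 -> F l) ->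
  n.-1 <= \sum_(l < n) (F l : nat).
Proof.
move=> h; rewrite (bigD1 l0) //= (eq_bigr (fun _ => 1)); last by move=> l /h ->.
by rewrite sum1_card cardC1 card_ord leq_addl.
Qed.

Lemma star_ge j k : D - 1 <= (Cv j k \in C : nat) + \sum_(l < D - 1) (Lv j k l \in C : nat).
Proof.
case: (boolP [forall l, Lv j k l \in C]) => [/forallP h|].
  by rewrite sum_all // leq_addl.
rewrite negb_forall => /existsP [l0 hl0].
case: (star_leaf_out hl0) => -> h.
have := @sum_but _ (fun l => Lv j k l \in C) l0 h.
rewrite /=; lia.
Qed.

Lemma star0_ge j k : val k = 0 -> D <= (Pv j \in C : nat) + (Sv j \in C : nat) +
   ((Cv j k \in C : nat) + \sum_(l < D - 1) (Lv j k l \in C : nat)).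
Proof.
move=> hk.
have := star_ge j k.
case hP: (Pv j \in C); first by rewrite /=; lia.
case hS: (Sv j \in C); first by rewrite /=; lia.
move=> _.
have hc : Cv j k \in C.
  case: (domP (Sv j)) => w wC; rewrite inN_Sv.
  case/or3P => [/eqP E|/eqP E|/andP [/eqP E1]].
  - by rewrite -E wC in hS.
  - by rewrite -E wC in hP.
  case: w wC E1 => j' [[[]|[]]|[k'|[k' l']]] //= wC ej /eqP hk'.
  have -> : k = k' by apply: val_inj; rewrite /= hk hk'.
  by rewrite /Cv -ej.
case: (boolP [forall l, Lv j k l \in C]) => [/forallP h|].
  by rewrite sum_all // hc /=; lia.
rewrite negb_forall => /existsP [l0 hl0].
have : Sv j != Lv j k l0 by rewrite /Sv /Lv !sumE.
case/sepP => w wC; rewrite inN_Sv inN_Lv.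
have hcS : nb (Sv j) (Cv j k) by rewrite inN_Sv /Cv /= hk !eqxx !orbT.
have h1 : (w == Sv j) = false by apply: contraFF hS => /eqP <-.
have h2 : (w == Pv j) = false by apply: contraFF hP => /eqP <-.
have h3 : (w == Lv j k l0) = false by apply: contraNF hl0 => /eqP <-.
rewrite h1 h2 h3 /=.
case: (eqVneq w (Cv j k)) => [->|ne]; first by rewrite /Cv /= !eqxx hk.
rewrite eqbF_neg negbK; case: w wC ne {h1 h2 h3} => j' [[[]|[]]|[k'|[k' l']]] //= wC ne; rewrite ?andbF //.
case/andP => /eqP ej /eqP ek; case/eqP: ne; rewrite /Cv ej.
by have -> : k' = k by apply: val_inj; rewrite /= hk ek.
Qed.

Lemma blk_ge j : (D - 2) * (D - 1) + 1 <= blk C j.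
Proof.
have hk0 : (0 < D - 2)%N by rewrite subn_gt0 (leq_trans _ hD).
pose k0 := Ordinal hk0.
rewrite /blk (bigD1 k0) //= addnA.
have h0 := @star0_ge j k0 (erefl _).
have h1 : \sum_(k < D - 2 | k != k0) (D - 1) <=
          \sum_(k < D - 2 | k != k0) ((Cv j k \in C : nat) + \sum_(l < D - 1) (Lv j k l \in C : nat)).
  by apply: leq_sum => k _; exact: star_ge.
move: h1; rewrite sum_nat_const cardC1 card_ord.
rewrite /Pv /Sv /Cv /Lv /= in h0 *.
move=> h1; apply: leq_trans (leq_add h0 h1).
have hD' := hD; nia.
Qed.
End Lower.

Lemma bigmin_le (I : finType) (P : pred I) (F : I -> nat) x i0 : P i0 ->
  \big[minn/x]_(i | P i) F i <= F i0.
Proof.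
move=> hP; have : i0 \in index_enum I by rewrite mem_index_enum.
elim: (index_enum I) => [|a r IH] //; rewrite inE big_cons.
case/orP => [/eqP <-|/IH h]; first by rewrite hP geq_minl.
by case: ifP => // _; rewrite geq_min h orbT.
Qed.

Lemma gamma_val : gammaID (@Tadj t D) = t * ((D - 2) * (D - 1) + 1).
Proof.
apply/eqP; rewrite eqn_leq; apply/andP; split.
  by rewrite -card_C0; apply: bigmin_le; exact: C0_id.
rewrite /gammaID; elim/big_ind: _ => //.
- by rewrite -card_C0; apply: leqW; exact: max_card.
- by move=> x y hx hy; rewrite leq_min hx hy.
- move=> C hC; rewrite card_blk -[X in X * _]card_ord -sum_nat_const.
  by apply: leq_sum => j _; exact: blk_ge.
Qed.

Lemma card_V : #|V| = t * (2 + (D - 2) + (D - 2) * (D - 1)).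
Proof. by rewrite card_prod !card_sum !card_unit card_prod !card_ord. Qed.
End S.

From mathcomp.algebra_tactics Require Import ring lra.
Import Order.TTheory GRing.Theory Num.Theory.
Local Open Scope ring_scope.

Unset Implicit Arguments.
Theorem mainTheorem18 (t D : nat) (ht : (3 <= t)%N) (hD : (4 <= D)%N) :
  let n : rat := (#|Tvtx t D|)%:R in
  let d : rat := D%:R in
  ((gammaID (@Tadj t D))%:R : rat)
    = ((d - 1 + 1 / (d - 2)) / (d + 2 / (d - 2))) * n
  /\ ((d - 1 + 1 / (d - 2)) / (d + 2 / (d - 2))) * n > ((d - 1) / d) * n - n / (d ^+ 2).
Proof.
move=> n d.
have h2 : (2 <= D)%N by apply: leq_trans hD.
have h1 : (1 <= D)%N by apply: leq_trans hD.
have e2 : ((D - 2)%:R : rat) = d - 2 by rewrite natrB.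
have e1 : ((D - 1)%:R : rat) = d - 1 by rewrite natrB.
have hd2 : 0 < d - 2.
  by rewrite subr_gt0 /d ltr_nat (leq_trans _ hD).
have hd : 0 < d by rewrite /d ltr0n (leq_trans _ hD).
have htp : (0 : rat) < t%:R by rewrite ltr0n (leq_trans _ ht).
have en : n = t%:R * (2 + (d - 2) + (d - 2) * (d - 1)).
  by rewrite /n card_V natrM !natrD natrM e2 e1.
rewrite gamma_val // natrM natrD natrM e2 e1 en.
have hq : 0 < d * (d - 2) + 2 by rewrite addr_gt0 // mulr_gt0.
split.
  by field; rewrite -[D%:R]/d (gt_eqF hd2) (gt_eqF hq).
rewrite -subr_gt0.
have -> : forall N : rat, (d - 1 + 1 / (d - 2)) / (d + 2 / (d - 2)) * N - ((d - 1) / d * N - N / d ^+ 2)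
   = 2 * N / (d ^+ 2 * (d * (d - 2) + 2)).
  by move=> N; field; rewrite -[D%:R]/d (gt_eqF hq) (gt_eqF hd) (gt_eqF hd2).
have hd1 : 0 < d - 1 by rewrite subr_gt0 /d ltr1n (leq_trans _ hD).
apply: divr_gt0.
  apply: mulr_gt0 => //; apply: mulr_gt0 => //; apply: addr_gt0; [exact: addr_gt0 | exact: mulr_gt0].
by apply: mulr_gt0 => //; exact: exprn_gt0.
Qed.
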